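(* Let $K$ be a field, $X$ a finite connected poset, and fix $u_0\in X$. Let $\varphi,\psi$ be elementary Lie automorphisms of $I(X,K)$ such that $\theta_\varphi=\theta_\psi$ and $\varphi(e_z)(u_0,u_0)=\psi(e_z)(u_0,u_0)$ for all $z\in X$. Then $\varphi(e_z)=\psi(e_z)$ for all $z\in X$.
   Context: $I(X,K)$ is the incidence algebra: functions $f:X\times X\to K$ with $f(x,y)=0$ unless $x\le y$, product $(fg)(x,y)=\sum_{x\le t\le y}f(x,t)g(t,y)$; $e_{xy}$ ($x\le y$) is the basis element equal to $1$ at $(x,y)$ and $0$ elsewhere, $e_z=e_{zz}$. $B=\{e_{xy}:x<y\}$. A Lie automorphism is a bijective linear map preserving $[f,g]=fg-gf$. With $l(\lfloor x,y\rfloor)$ the maximal length of a chain in $\{z:x\le z\le y\}$ and $L_i=\mathrm{span}_K\{e_{xy}:l(\lfloor x,y\rfloor)=i\}$, for a Lie automorphism $\chi$ let $\widetilde\chi$ send $e_{xy}\in L_i$ to the $L_i$-component of $\chi(e_{xy})$. A Lie automorphism $\varphi$ is elementary if $\varphi=\widetilde\chi$ for some Lie automorphism $\chi$ (equivalently $\varphi(L_i)\subseteq L_i$ for all $i$). For elementary $\varphi$, for each $x<y$ there are a unique $e_{uv}\in B$ and $k\in K^*$ with $\varphi(e_{xy})=k e_{uv}$; set $\theta_\varphi(e_{xy})=e_{uv}$. Connected means any two elements are joined by a sequence in which consecutive elements are in a covering relation. *)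

(* Defs.v *)
From HB Require Import structures.
From mathcomp Require Import all_boot all_order all_algebra.
Set Implicit Arguments. Unset Strict Implicit. Unset Printing Implicit Defensive.
Import Order.TTheory GRing.Theory.
Local Open Scope ring_scope.

(* Incidence algebra I(X,K) of a finite poset X over a field K, realised
   inside the space of all functions X*X -> K. *)
Section Incidence.
Variables (d : Order.disp_t) (X : finPOrderType d) (K : fieldType).

Definition fun2 := {ffun X * X -> K}.

Definition inI (f : fun2) : Prop :=
  forall x y : X, ~~ (x <= y)%O -> f (x, y) = 0.

Definition incmul (f g : fun2) : fun2 :=
  [ffun p : X * X => \sum_(t : X | (p.1 <= t)%O && (t <= p.2)%O) f (p.1, t) * g (t, p.2)].

Definition scal (k : K) (f : fun2) : fun2 := [ffun p => k * f p].

Definition lie (f g : fun2) : fun2 := incmul f g - incmul g f.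

Definition e (x y : X) : fun2 := [ffun p : X * X => if p == (x, y) then 1 else 0].
Definition ez (z : X) : fun2 := e z z.

Definition LieAut (phi : fun2 -> fun2) : Prop :=
  (forall f, inI f -> inI (phi f)) /\
  (forall f g, inI f -> inI g -> phi (f + g) = phi f + phi g) /\
  (forall k f, inI f -> phi (scal k f) = scal k (phi f)) /\
  (forall f g, inI f -> inI g -> phi f = phi g -> f = g) /\
  (forall g, inI g -> exists2 f, inI f & phi f = g) /\
  (forall f g, inI f -> inI g -> phi (lie f g) = lie (phi f) (phi g)).

Definition is_chain (S : {set X}) : bool :=
  [forall a in S, forall b in S, (a <= b)%O || (b <= a)%O].

Definition len (x y : X) : nat :=
  \max_(S : {set X} | (S \subset [set z | (x <= z)%O && (z <= y)%O]) && is_chain S)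
    (#|S|.-1)%N.

Definition proj (i : nat) (g : fun2) : fun2 :=
  [ffun p : X * X => if (p.1 <= p.2)%O && (len p.1 p.2 == i) then g p else 0].

Definition tilde (chi : fun2 -> fun2) (f : fun2) : fun2 :=
  \sum_(p : X * X | (p.1 <= p.2)%O) scal (f p) (proj (len p.1 p.2) (chi (e p.1 p.2))).

Definition elementary (phi : fun2 -> fun2) : Prop :=
  LieAut phi /\
  exists chi, LieAut chi /\ forall f, inI f -> phi f = tilde chi f.

(* theta_phi(e_xy) = e_uv  iff  phi(e_xy) = k e_uv for some k in K^* (x<y, u<v) *)
Definition theta_rel (phi : fun2 -> fun2) (x y u v : X) : Prop :=
  (u < v)%O /\ exists2 k : K, k != 0 & phi (e x y) = scal k (e u v).

Definition theta_eq (phi psi : fun2 -> fun2) : Prop :=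
  forall x y : X, (x < y)%O -> forall u v : X,
    theta_rel phi x y u v <-> theta_rel psi x y u v.

Definition covers (a b : X) : bool :=
  (a < b)%O && [forall c, ~~ ((a < c)%O && (c < b)%O)].

Definition connected_poset : Prop :=
  forall a b : X, exists s : seq X,
    path (fun p q => covers p q || covers q p) a s /\ last a s = b.

End Incidence.

(* Main.v *)
Require Import Defs.
From HB Require Import structures.
From mathcomp Require Import all_boot all_order all_algebra.
From mathcomp Require Import ring.
Set Implicit Arguments. Unset Strict Implicit. Unset Printing Implicit Defensive.
Import Order.TTheory GRing.Theory.
Local Open Scope ring_scope.

Section S.
Variables (d : Order.disp_t) (X : finPOrderType d) (K : fieldType).
Implicit Types (f g : fun2 X K) (x y z a b u v w : X).

Lemma addE f g p : (f + g) p = f p + g p.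
Proof. by rewrite !ffunE. Qed.
Lemma subE f g p : (f - g) p = f p - g p.
Proof. by rewrite !ffunE. Qed.
Lemma zeroE p : (0 : fun2 X K) p = 0.
Proof. by rewrite !ffunE. Qed.

Lemma sum_single (I : finType) (P : pred I) (F : I -> K) c :
  (forall i, i != c -> F i = 0) -> \sum_(i | P i) F i = if P c then F c else 0.
Proof.
move=> F0; case: ifP => Pc.
  by rewrite (bigD1 c) //= big1 ?addr0 // => i /andP [_ /F0].
apply: big1 => i Pi; apply: F0; apply/eqP => ic; by rewrite -ic Pi in Pc.
Qed.

Lemma inI_e x y : (x <= y)%O -> inI (e K x y).
Proof. by move=> Hxy a b; rewrite ffunE; case: eqP => // -[-> ->]; rewrite Hxy. Qed.

Lemma inI0 : inI (0 : fun2 X K).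
Proof. by move=> a b _; rewrite zeroE. Qed.
Lemma inID f g : inI f -> inI g -> inI (f + g).
Proof. by move=> Hf Hg a b H; rewrite addE Hf // Hg // addr0. Qed.
Lemma inIZ k f : inI f -> inI (scal k f).
Proof. by move=> Hf a b H; rewrite ffunE Hf // mulr0. Qed.

Lemma decomp f : inI f ->
  f = \sum_(p : X * X | (p.1 <= p.2)%O) scal (f p) (e K p.1 p.2).
Proof.
move=> Hf; apply/ffunP => q; rewrite sum_ffunE.
rewrite (@sum_single _ _ _ q).
  case: ifP => Hq; first by rewrite !ffunE -surjective_pairing eqxx mulr1.
  by case: q Hq => a b /= Hq; rewrite Hf // Hq.
move=> p pq; rewrite !ffunE -surjective_pairing.
by rewrite eq_sym (negbTE pq) mulr0.
Qed.

Lemma len_refl z : len z z = 0%N.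
Proof.
apply/eqP; rewrite -leqn0; apply/bigmax_leqP => S /andP [HS _].
have : S \subset [set z].
  apply: subset_trans HS _; apply/subsetP => t; rewrite !inE => /andP [h1 h2].
  by apply/eqP; apply: le_anti; rewrite h1 h2.
by move/subset_leq_card; rewrite cards1; case: #|S| => [|[]].
Qed.

Lemma len_lt x y : (x < y)%O -> (0 < len x y)%N.
Proof.
move=> Hxy; have Hne : x != y by rewrite lt_neqAle in Hxy; case/andP: Hxy.
have Hle : (x <= y)%O by apply: ltW.
apply: (leq_trans _ (@leq_bigmax_cond _ _ (fun S : {set X} => (#|S|.-1)%N) [set x; y] _)).
  by rewrite cards2 Hne.
apply/andP; split.
  apply/subsetP => t; rewrite !inE => /orP [] /eqP ->; by rewrite ?lexx ?Hle.
apply/forallP => a; apply/implyP; rewrite !inE => Ha.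
apply/forallP => b; apply/implyP; rewrite !inE => Hb.
by case/orP: Ha => /eqP ->; case/orP: Hb => /eqP ->; rewrite ?lexx ?Hle ?orbT.
Qed.


Arguments inI0 : clear implicits.
Arguments inID : clear implicits.
Arguments inIZ : clear implicits.
Arguments inI_e : clear implicits.
Section Phi.
Variable phi : fun2 X K -> fun2 X K.
Hypothesis Hel : elementary phi.

Lemma phi_inI f : inI f -> inI (phi f).
Proof. by case: Hel => -[H _] _; apply: H. Qed.

Lemma phi0 : phi 0 = 0.
Proof.
case: Hel => -[_ [Hadd _]] _.
have := Hadd 0 0 (inI0) (inI0); rewrite addr0 => H.
by apply: (@addrI _ (phi 0)); rewrite addr0 -H.
Qed.

Lemma phi_sum (I : finType) (P : pred I) (F : I -> fun2 X K) :
  (forall i, P i -> inI (F i)) ->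
  phi (\sum_(i | P i) F i) = \sum_(i | P i) phi (F i).
Proof.
case: Hel => -[_ [Hadd _]] _ HF.
have [] : inI (\sum_(i | P i) F i) /\ phi (\sum_(i | P i) F i) = \sum_(i | P i) phi (F i);
  last by [].
apply: (@big_ind2 _ _ (fun (y1 y2 : fun2 X K) => inI y1 /\ phi y1 = y2)).
- by split; [apply: inI0 | apply: phi0].
- move=> x1 x2 y1 y2 [H1 <-] [H2 <-]; split; first by apply: inID.
  by rewrite Hadd.
- by move=> i Pi; split => //; apply: HF.
Qed.

Lemma phi_scal k f : inI f -> phi (scal k f) = scal k (phi f).
Proof. by case: Hel => -[_ [_ [H _]]] _; apply: H. Qed.

Lemma phi_entry f a b : inI f ->
  phi f (a, b) = \sum_(p : X * X | (p.1 <= p.2)%O) f p * phi (e K p.1 p.2) (a, b).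
Proof.
move=> Hf; rewrite {1}(decomp Hf) phi_sum; last by move=> p Hp; apply: inIZ; apply: inI_e.
rewrite sum_ffunE; apply: eq_bigr => p Hp.
by rewrite phi_scal ?ffunE //; apply: inI_e.
Qed.

Lemma phi_e_entry x y a b : (x <= y)%O ->
  exists chi, phi (e K x y) (a, b) = proj (len x y) (chi (e K x y)) (a, b).
Proof.
move=> Hxy; case: Hel => _ [chi [_ Hchi]]; exists chi.
rewrite Hchi; last by apply: inI_e.
rewrite /tilde sum_ffunE (@sum_single _ _ _ (x, y)) /=.
  case: ifP => [_|H]; first by rewrite !ffunE eqxx mul1r.
  by exfalso; move/negbT: H => /negP; apply; exact: Hxy.
move=> p Hp; rewrite !ffunE (negbTE Hp) mul0r.
done.
Qed.

Lemma diag0 z a b : a != b -> phi (ez K z) (a, b) = 0.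
Proof.
move=> Hab; have [chi ->] := @phi_e_entry z z a b (lexx z).
rewrite ffunE /= len_refl.
case: ifP => // /andP [Hle /eqP H0].
have : (0 < len a b)%N by apply: len_lt; rewrite lt_neqAle Hab Hle.
by rewrite H0.
Qed.

Lemma off0 x y a : (x < y)%O -> phi (e K x y) (a, a) = 0.
Proof.
move=> Hxy; have [chi ->] := @phi_e_entry x y a a (ltW Hxy).
rewrite ffunE /= len_refl.
case: ifP => // /andP [_ /eqP H0].
by have := len_lt Hxy; rewrite -H0.
Qed.


End Phi.

Lemma lie_ez_e z x y : (x <= y)%O ->
  lie (ez K z) (e K x y) = scal ((z == x)%:R - (z == y)%:R) (e K x y).
Proof.
move=> Hxy; apply/ffunP => -[a b]; rewrite subE !ffunE /=.
rewrite (@sum_single _ _ _ x); last first.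
  by move=> t Ht; rewrite !ffunE !xpair_eqE (negbTE Ht) andFb mulr0.
rewrite (@sum_single _ _ _ y); last first.
  by move=> t Ht; rewrite !ffunE !xpair_eqE (negbTE Ht) andbF mul0r.
rewrite !ffunE !xpair_eqE !eqxx /=.
case: (eqVneq a x) => [->|ax]; case: (eqVneq b y) => [->|hby]; rewrite ?eqxx ?andbT ?andbF ?mulr0 ?mul0r /=.
- rewrite lexx Hxy /= mulr1 mul1r !andbb ![_ == z]eq_sym.
  by rewrite lexx mulr1; case: (z == x); case: (z == y).
- rewrite if_same sub0r; case: ifP => _; last by rewrite oppr0.
  case: (eqVneq y z) => [<-|yz] /=; last by rewrite mulr0 oppr0.
  by rewrite (negbTE hby) mulr0 oppr0.
- rewrite [X in _ - X]if_same subr0; case: ifP => _ //.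
  case: (eqVneq x z) => [<-|xz] /=; last by rewrite andbF mul0r.
  by rewrite (negbTE ax) mul0r.
- by rewrite !if_same subr0.
Qed.

Lemma lie_entry (D P : fun2 X K) u v :
  (forall a b, a != b -> D (a, b) = 0) -> (u <= v)%O ->
  lie D P (u, v) = (D (u, u) - D (v, v)) * P (u, v).
Proof.
move=> HD Huv; rewrite subE !ffunE /=.
rewrite (@sum_single _ _ _ u); last by move=> t Ht; rewrite HD ?mul0r // eq_sym.
rewrite (@sum_single _ _ _ v); last by move=> t Ht; rewrite HD ?mulr0.
rewrite !lexx Huv /= mulrBl; congr (_ - _); by rewrite mulrC.
Qed.

Lemma sum_diag (G : X -> X -> K) : (forall a b, (a < b)%O -> G a b = 0) ->
  \sum_(p : X * X | (p.1 <= p.2)%O) G p.1 p.2 = \sum_z G z z.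
Proof.
move=> HG; rewrite big_mkcond /=.
rewrite -(pair_bigA _ (fun a b => if (a <= b)%O then G a b else 0)) /=.
apply: eq_bigr => a _; rewrite (@sum_single _ _ _ a) /= ?lexx //.
move=> b Hb; case: ifP => // Hab; apply: HG; by rewrite lt_neqAle eq_sym Hb Hab.
Qed.

Lemma comb a b u v : (a < b)%O -> (u < v)%O ->
  (forall w, (w == a)%:R - (w == b)%:R = (w == u)%:R - (w == v)%:R :> K) ->
  a = u /\ b = v.
Proof.
move=> ab uv H.
have ab' := lt_eqF ab; have uv' := lt_eqF uv.
have Ha := H a; have Hb := H b.
rewrite eqxx ab' in Ha; rewrite eqxx eq_sym ab' in Hb.
case: (eqVneq a u) => [au|au].
  subst u; split => //; move: Hb; rewrite eq_sym ab'.
  case: (eqVneq b v) => // bv; rewrite /= ?mulr0n ?mulr1n ?sub0r ?subr0 ?oppr0 => /eqP.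
  by rewrite oppr_eq0 oner_eq0.
move: Ha; rewrite (negbTE au); case: (eqVneq a v) => [av|av]; last first.
  by rewrite /= ?mulr0n ?mulr1n ?sub0r ?subr0 ?oppr0 => /eqP; rewrite oner_eq0.
move=> _; subst v; move: Hb; rewrite (eq_sym b a) ab'.
case: (eqVneq b u) => [bu|bu]; last first.
  by rewrite /= ?mulr0n ?mulr1n ?sub0r ?subr0 ?oppr0  => /eqP; rewrite oppr_eq0 oner_eq0.
move=> _; subst u; by have := lt_trans ab uv; rewrite ltxx.
Qed.

Section Phi2.
Variable phi : fun2 X K -> fun2 X K.
Hypothesis Hel : elementary phi.

Lemma key x y u v : (x < y)%O -> phi (e K x y) (u, v) != 0 ->
  forall z, phi (ez K z) (u, u) - phi (ez K z) (v, v) = (z == x)%:R - (z == y)%:R.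
Proof.
move=> Hxy Hne z.
have HI := phi_inI Hel (inI_e x y (ltW Hxy)).
have Huv : (u <= v)%O.
  apply/negPn/negP => H; by rewrite HI ?eqxx in Hne.
case: (Hel) => -[_ [_ [_ [_ [_ Hlie]]]]] _.
have := Hlie _ _ (inI_e z z (lexx z)) (inI_e x y (ltW Hxy)).
rewrite lie_ez_e ?(ltW Hxy) // phi_scal //; last exact: inI_e x y (ltW Hxy).
move/(congr1 (fun f => f (u, v))); rewrite lie_entry //; last first.
  by move=> a b; apply: diag0.
rewrite ffunE => /esym; exact: (mulIf Hne).
Qed.


Lemma span w : exists al : X -> K,
  forall b, (w == b)%:R = \sum_z al z * phi (ez K z) (b, b).
Proof.
case: (Hel) => -[_ [_ [_ [_ [Hsurj _]]]]] _.
have [f Hf Hfw] := Hsurj _ (inI_e w w (lexx w)).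
exists (fun z => f (z, z)) => b.
have := congr1 (fun g => g (b, b)) Hfw; rewrite /= phi_entry // => H.
rewrite /ez ffunE xpair_eqE andbb eq_sym in H.
have -> : (w == b)%:R = (if w == b then (1 : K) else 0) by case: eqP.
rewrite -H.
rewrite (eq_bigr (fun p => f (p.1, p.2) * phi (e K p.1 p.2) (b, b))); last by move=> [? ?].
rewrite (@sum_diag (fun a c => f (a, c) * phi (e K a c) (b, b))) //.
by move=> a c Hac; rewrite off0 ?mulr0.
Qed.

Lemma mono x y u v : (x < y)%O -> phi (e K x y) (u, v) != 0 ->
  phi (e K x y) = scal (phi (e K x y) (u, v)) (e K u v).
Proof.
move=> Hxy Huv.
have HI := phi_inI Hel (inI_e x y (ltW Hxy)).
have Hlt : forall a b, phi (e K x y) (a, b) != 0 -> (a < b)%O.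
  move=> a b Hab; rewrite lt_neqAle; apply/andP; split.
    by apply/eqP => E; subst b; rewrite off0 ?eqxx in Hab.
  by apply/negPn/negP => H; rewrite HI ?eqxx in Hab.
apply/ffunP => -[a b]; rewrite !ffunE.
case: eqP => [[-> ->]|neq]; first by rewrite mulr1.
rewrite mulr0; apply/eqP; apply: contraT => Hab.
have E : forall w, (w == a)%:R - (w == b)%:R = (w == u)%:R - (w == v)%:R :> K.
  move=> w; have [al Hal] := span w.
  rewrite ![(w == _)%:R]Hal -!sumrB; apply: eq_bigr => z _.
  by rewrite -!mulrBr (key Hxy Hab) (key Hxy Huv).
have [Hau Hbv] := comb (Hlt _ _ Hab) (Hlt _ _ Huv) E.
by subst; case: neq.
Qed.

Lemma surj_entry u v : (u < v)%O ->
  exists x y, (x < y)%O /\ phi (e K x y) (u, v) != 0.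
Proof.
move=> Huv.
case: (Hel) => -[_ [_ [_ [_ [Hsurj _]]]]] _.
have [f Hf Hfw] := Hsurj _ (inI_e u v (ltW Huv)).
have := congr1 (fun g => g (u, v)) Hfw; rewrite /= phi_entry // ffunE eqxx.
case: (pickP (fun p : X * X => (p.1 < p.2)%O && (phi (e K p.1 p.2) (u, v) != 0))).
  by move=> [x y] /andP [H1 H2]; exists x, y.
move=> none; rewrite big1; first by move/eqP; rewrite eq_sym oner_eq0.
move=> [a b] /= Hab.
case: (eqVneq a b) => [<-|Hne].
  by rewrite (@diag0 phi Hel a u v) ?mulr0 // (lt_eqF Huv).
have := none (a, b); rewrite /= lt_neqAle Hne Hab /= => /negbFE/eqP ->.
by rewrite mulr0.
Qed.

End Phi2.
End S.

Unset Implicit Arguments.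
Set Strict Implicit.

Theorem lemma5p8 (d : Order.disp_t) (X : finPOrderType d) (K : fieldType)
  (u0 : X) (phi psi : fun2 X K -> fun2 X K) :
  connected_poset X ->
  elementary phi -> elementary psi ->
  theta_eq phi psi ->
  (forall z : X, phi (ez K z) (u0, u0) = psi (ez K z) (u0, u0)) ->
  forall z : X, phi (ez K z) = psi (ez K z).
Proof.
move=> Hconn Hphi Hpsi Hth H0 z.
pose dl := fun a => phi (ez K z) (a, a) - psi (ez K z) (a, a).
have Hstep : forall u v, (u < v)%O -> dl u = dl v.
  move=> u v Huv.
  have [x [y [Hxy Hne]]] := surj_entry Hphi Huv.
  have Hm := mono Hphi Hxy Hne.
  have : theta_rel phi x y u v.
    by split => //; exists (phi (e K x y) (u, v)).
  move/(Hth x y Hxy u v) => [_ [k Hk Hpsi_e]].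
  have Hne' : psi (e K x y) (u, v) != 0 by rewrite Hpsi_e !ffunE eqxx mulr1.
  have E1 := key Hphi Hxy Hne z; have E2 := key Hpsi Hxy Hne' z.
  rewrite /dl; apply/eqP; rewrite -subr_eq0; apply/eqP.
  transitivity ((phi (ez K z) (u, u) - phi (ez K z) (v, v))
     - (psi (ez K z) (u, u) - psi (ez K z) (v, v))); first by ring.
  by rewrite E1 E2 subrr.
have Hpath : forall s p, path (fun p q => covers p q || covers q p) p s ->
    dl p = dl (last p s).
  elim => [//|q s IH] p /= /andP [Hpq Hs]; rewrite -IH //.
  by case/orP: Hpq => /andP [H _]; [apply: Hstep | apply/esym; apply: Hstep].
have Hall : forall a, dl a = 0.
  move=> a; have [s [Hs Hl]] := Hconn u0 a.
  by rewrite -Hl -(Hpath s u0 Hs) /dl H0 subrr.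
apply/ffunP => -[a b]; case: (eqVneq a b) => [<-|Hab].
  by apply/eqP; rewrite -subr_eq0; apply/eqP; apply: Hall.
by rewrite (diag0 Hphi) // (diag0 Hpsi).
Qed.
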